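(* Let $r_1,\dots,r_n\in\mathbb R$ and $r=\mathrm{diag}(r_1,\dots,r_n)$. For each $1\le i,k\le n$, $q_{i,k}$ interlaces $\sigma_k(r+tI)$: if $u_1\ge u_2\ge\cdots\ge u_k$ are the roots of $\sigma_k(r+tI)$ and $v_1\ge\cdots\ge v_{k-1}$ are the roots of $q_{i,k}$, then $u_k\le v_{k-1}\le u_{k-1}\le\cdots\le v_1\le u_1$.
   Context: $\sigma_k(r+tI)=\sum_{i_1<\cdots<i_k}(t+r_{i_1})\cdots(t+r_{i_k})$, and $q_{i,k}(t)=\sum_{j=0}^{k-1}(-1)^j\sigma_{k-1-j}(r+tI)(t+r_i)^j$ with $\sigma_0=1$; both are real-rooted. *)

(* Defs.v *)
From HB Require Import structures.
From mathcomp Require Import all_boot all_order all_algebra.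
Set Implicit Arguments. Unset Strict Implicit. Unset Printing Implicit Defensive.
Import Order.TTheory GRing.Theory Num.Theory.
Local Open Scope ring_scope.

(* sigma_k(r + tI) = sum over k-subsets S of prod_{j in S} (t + r_j), as a
   polynomial in t.  sigma_0 = 1 (empty product over the empty set). *)
Definition sigma_poly (R : nzRingType) (n : nat) (r : 'I_n -> R) (k : nat)
  : {poly R} :=
  \sum_(S : {set 'I_n} | #|S| == k) \prod_(j in S) ('X + (r j)%:P).

Definition q_poly (R : nzRingType) (n : nat) (r : 'I_n -> R) (i : 'I_n) (k : nat)
  : {poly R} :=
  \sum_(j < k) ((-1) ^+ j *: sigma_poly r (k.-1 - j) * ('X + (r i)%:P) ^+ j).

Definition is_root_list (R : nzRingType) (p : {poly R}) (s : seq R) : Prop :=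
  p = lead_coef p *: \prod_(x <- s) ('X - x%:P).

Definition nonincr (R : numDomainType) (s : seq R) : bool :=
  sorted (fun a b => b <= a) s.

(* Main.v *)
Require Import Defs.
From HB Require Import structures.
From mathcomp Require Import all_boot all_order all_algebra.
From mathcomp Require Import polyrcf.
From mathcomp Require Import ring lra zify.
Import Order.TTheory GRing.Theory Num.Theory.
Set Implicit Arguments. Unset Strict Implicit. Unset Printing Implicit Defensive.
Local Open Scope ring_scope.

Section Lists.
Variable R : rcfType.
Implicit Types (x y z w s : seq R) (p q : {poly R}).

Definition PP s : {poly R} := \prod_(a <- s) ('X - a%:P).
Definition gtc (c : R) := fun l : R => c < l.

Lemma PP_cons a s : PP (a :: s) = ('X - a%:P) * PP s.
Proof. by rewrite /PP big_cons. Qed.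

Lemma PP_cat s t : PP (s ++ t) = PP s * PP t.
Proof. by rewrite /PP big_cat. Qed.

Lemma PP_monic s : PP s \is monic.
Proof. exact: monic_prod_XsubC. Qed.

Lemma size_PP s : size (PP s) = (size s).+1.
Proof. exact: size_prod_XsubC. Qed.

Lemma lc_PP s : lead_coef (PP s) = 1.
Proof. exact: lead_coef_prod_XsubC. Qed.

Lemma PP_neq0 s : PP s != 0.
Proof. by rewrite -size_poly_eq0 size_PP. Qed.

Lemma sign_PP (c : R) s : c \notin s ->
  0 < (-1) ^+ (count (gtc c) s) * (PP s).[c].
Proof.
elim: s => [|a s IH]; first by rewrite /PP big_nil hornerC expr0 mulr1 ltr01.
rewrite in_cons negb_or => /andP[ca cs].
rewrite PP_cons hornerM !hornerE /= /gtc.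
have H := IH cs; have [ca'|ca'|ca'] := ltgtP c a; last by rewrite ca' eqxx in ca.
- rewrite /= add1n exprS mulN1r -mulrA mulNr -mulrN -mulNr mulrCA mulr_gt0 //.
  by rewrite opprB subr_gt0.
- by rewrite /= add0n -mulrA mulrCA mulr_gt0 // subr_gt0.
Qed.

Fixpoint interl x y : bool :=
  match x, y with
  | [:: _], [::] => true
  | x0 :: ((x1 :: _) as xs), y0 :: ys => [&& x1 < y0, y0 < x0 & interl xs ys]
  | _, _ => false
  end.

Lemma interl_size x y : interl x y -> size x = (size y).+1.
Proof.
elim: y x => [|b y IH] [|a [|a' x]] //=.
by move=> /and3P[_ _ h]; have := IH (a' :: x) h => /= [[->]].
Qed.

Lemma interl_sorted x y : interl x y -> sorted >%R x /\ sorted >%R y.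
Proof.
elim: y x => [|b y IH] [|a [|a' x]] //=.
move=> /and3P[h1 h2 h3]; have [s1 s2] := IH (a' :: x) h3.
split; first by rewrite (lt_trans h1 h2).
case: y h3 s2 {IH} => [|b' y] //=.
case: x {s1} => [|a'' x] //= /and3P[_ h4 _] ->.
by rewrite andbT (lt_trans h4 h1).
Qed.

Lemma sorted_lt_head a s : sorted >%R (a :: s) -> all (fun l => l < a) s.
Proof. by move=> h; apply: (order_path_min _ h) => y x' z h1 h2; exact: lt_trans h2 h1. Qed.

Lemma count_gtc0 a s c : sorted >%R (a :: s) -> a <= c ->
  count (gtc c) (a :: s) = 0%N.
Proof.
move=> /sorted_lt_head /allP H ac.
apply/eqP; rewrite -leqn0 leqNgt -has_count; apply/hasP => -[l].
rewrite in_cons => /orP[/eqP -> | /H la]; rewrite /gtc.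
  by rewrite ltNge ac.
by move=> cl; have := lt_trans (le_lt_trans ac cl) la; rewrite ltxx.
Qed.

Lemma interl_count x y c : interl x y ->
  (count (gtc c) y <= count (gtc c) x <= (count (gtc c) y).+1)%N.
Proof.
elim: y x => [|b y IH] [|a [|a' x]] //.
  by move=> _ /=; rewrite addn0; case: (gtc c a).
move=> H; have [sx sy] := interl_sorted H.
have /and3P[h1 h2 h3] : [&& a' < b, b < a & interl (a' :: x) y] := H.
have /andP[i1 i2] := IH (a' :: x) h3.
have -> : count (gtc c) (a :: a' :: x) = ((c < a)%R + count (gtc c) (a' :: x))%N by [].
have -> : count (gtc c) (b :: y) = ((c < b)%R + count (gtc c) y)%N by [].
case: (ltP c b) => cb.
  by rewrite (lt_trans cb h2) !add1n ltnS i1 ltnS i2.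
have -> : count (gtc c) (a' :: x) = 0%N.
  by apply: count_gtc0; [exact: (path_sorted sx) | exact: (ltW (lt_le_trans h1 cb))].
have : count (gtc c) (b :: y) = 0%N := count_gtc0 sy cb.
rewrite [count _ (b :: y)]/= /gtc ltNge cb add0n => ->.
by rewrite addn0; case: (c < a).
Qed.

Lemma count_sorted_nth z j : sorted >%R z -> (j < size z)%N ->
  count (gtc z`_j) z = j.
Proof.
elim: z j => [|a z IH] [|j] //=.
  move=> sz _; have := count_gtc0 sz (lexx a).
  by rewrite /= /gtc ltxx.
move=> sz jz; have /allP H := sorted_lt_head sz.
rewrite IH //; last exact: path_sorted sz.
by rewrite /gtc H // mem_nth.
Qed.

Lemma interl_count_nth z w j : interl z w -> (j < size w)%N ->
  count (gtc w`_j) z = j.+1.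
Proof.
elim: w z j => [|b w IH] [|a [|a' z]] [|j] //.
  move=> H _; have [sz _] := interl_sorted H.
  have /and3P[h1 h2 h3] : [&& a' < b, b < a & interl (a' :: z) w] := H.
  have -> : count (gtc (b :: w)`_0) (a :: a' :: z) =
     ((b < a)%R + count (gtc b) (a' :: z))%N by [].
  by rewrite h2 count_gtc0 //; [exact: (path_sorted sz) | exact: ltW].
move=> H jw; have [sz sw] := interl_sorted H.
have /and3P[h1 h2 h3] : [&& a' < b, b < a & interl (a' :: z) w] := H.
have -> : count (gtc (b :: w)`_j.+1) (a :: a' :: z) =
     ((w`_j < a)%R + count (gtc w`_j) (a' :: z))%N by [].
rewrite (IH (a' :: z) j h3 jw).
have /allP H' := sorted_lt_head sw.
have jw' : (j < size w)%N := jw.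
by rewrite (lt_trans (H' _ (mem_nth 0 jw')) h2).
Qed.

Lemma gt_trans : transitive (>%R : rel R).
Proof. by move=> y x z h1 h2; exact: lt_trans h2 h1. Qed.

Lemma sorted_gt_uniq s : sorted >%R s -> uniq s.
Proof. by apply: sorted_uniq; [exact: gt_trans | move=> a; rewrite /= ltxx]. Qed.

Lemma ivt_interl (p : {poly R}) x (e : R) : sorted >%R x -> (0 < size x)%N ->
  (forall j, (j < size x)%N -> 0 < e * (-1) ^+ j * p.[x`_j]) ->
  exists y, interl x y /\ all (root p) y.
Proof.
elim: x e => [|a x IH] e //; case: x IH => [|a' x] IH.
  by move=> _ _ _; exists [::].
move=> sx _ H.
have h0 := H 0%N isT; have h1 := H 1%N isT.
rewrite /= expr0 mulr1 in h0; rewrite /= expr1 in h1.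
have hneg : p.[a'] * p.[a] < 0 by nra.
have /andP[aa' _] : (a' < a) && path >%R a' x := sx.
have [y0 yin ry0] := poly_ivtoo (ltW aa') hneg.
move: yin; rewrite in_itv /= => /andP[y1 y2].
have [|y [iy ry]] := IH (- e) (path_sorted sx) isT.
  move=> j jx; have := H j.+1 jx; rewrite exprS /=.
  by rewrite mulN1r mulrN -mulNr.
exists (y0 :: y); split; last by rewrite /= ry0.
by rewrite /= y1 y2.
Qed.

Lemma poly_eq_PP p y : size p = (size y).+1 -> uniq y -> all (root p) y ->
  p = lead_coef p *: PP y.
Proof.
move=> sp uy ry.
have ur : poly.uniq_roots y by rewrite uniq_rootsE.
have [q pq] := uniq_roots_prod_XsubC ry ur.
have p0 : p != 0 by rewrite -size_poly_eq0 sp.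
have q0 : q != 0 by apply: contraNneq p0 => q0; rewrite pq q0 mul0r.
have : size p = (size q + (size y).+1).-1 by rewrite pq size_mul // ?PP_neq0 // size_PP.
rewrite sp addnS /= => /eqP; rewrite -{1}[(size y).+1]add1n eqn_add2r eq_sym => /eqP sq.
have [c qc] : exists c, q = c%:P by exists q`_0; apply/size1_polyC; rewrite sq.
by rewrite pq qc lead_coefM lead_coefC lc_PP mulr1 mul_polyC.
Qed.

Lemma decomp u : exists D z,
  [/\ perm_eq u (D ++ z), uniq z, {subset D <= z} & u =i z].
Proof.
elim: u => [|a u [D [z [pu uz sD uz']]]]; first by exists [::], [::].
case: (boolP (a \in z)) => az.
  exists (a :: D), z; split => //.
  - by rewrite /= perm_cons.
  - by move=> x; rewrite in_cons => /orP[/eqP -> //|/sD].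
  - by move=> x; rewrite in_cons uz'; case: eqP => // ->; rewrite az.
exists D, (a :: z); split.
- by rewrite perm_sym (perm_catCA D [:: a] z) /= perm_cons perm_sym.
- by rewrite /= az.
- by move=> x /sD xz; rewrite in_cons xz orbT.
- by move=> x; rewrite !in_cons uz'.
Qed.

Lemma path_ge_gt a s : uniq (a :: s) -> path >=%R a s -> path >%R a s.
Proof.
elim: s a => [|b s IH] a //=.
rewrite in_cons negb_or => /andP[/andP[ab _] /andP[bs us]] /andP[ba ps].
rewrite lt_neqAle eq_sym ab ba /=; apply: IH => //=; by rewrite bs.
Qed.

Lemma sorted_ge_gt s : uniq s -> sorted >=%R s -> sorted >%R s.
Proof. by case: s => //= a s; exact: path_ge_gt. Qed.

Lemma PP_rem (x : R) z : x \in z -> PP z = ('X - x%:P) * PP (rem x z).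
Proof. by move=> xz; rewrite /PP (perm_big _ (perm_to_rem xz)) big_cons. Qed.

Lemma deriv_PP_id D z : {subset D <= z} ->
  (PP D)^`() * PP z = PP D * \sum_(x <- D) PP (rem x z).
Proof.
elim: D => [|a D IH] sD.
  by rewrite /PP !big_nil derivC mul0r mulr0.
have az : a \in z by apply: sD; rewrite mem_head.
have IH' := IH (fun t tD => sD t (@mem_behead _ (a :: D) t tD)).
rewrite PP_cons big_cons derivM derivXsubC mul1r mulrDl -mulrA IH' (PP_rem az).
rewrite mulrDr; congr (_ + _); first by rewrite mulrCA mulrA.
by rewrite mulrA.
Qed.

Lemma horner_T D z (x : R) : uniq z -> x \in z ->
  (\sum_(a <- D) PP (rem a z)).[x] = (count_mem x D)%:R * (PP (rem x z)).[x].
Proof.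
move=> uz xz; elim: D => [|a D IH]; first by rewrite big_nil hornerC mul0r.
rewrite big_cons hornerD IH /=.
case: (eqVneq x a) => [<-|xa].
  by rewrite add1n mulrS mulrDl mul1r.
rewrite add0n.
have : x \in rem a z by rewrite (mem_rem_uniq _ uz) inE xa.
by rewrite -root_prod_XsubC => /rootP ->; rewrite add0r.
Qed.

Lemma horner_derivPP z (x : R) : x \in z ->
  (PP z)^`().[x] = (PP (rem x z)).[x].
Proof.
move=> xz; rewrite (PP_rem xz) derivM derivXsubC mul1r hornerD hornerM.
by rewrite !hornerE subrr mul0r addr0.
Qed.

Lemma interl_lt_head a z w : interl (a :: z) w -> all (fun l => l < a) w.
Proof.
move=> H; have [_ sw] := interl_sorted H; move: H sw.
case: w z => [|b w] [|a' z] // H sw.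
have /and3P[h1 h2 h3] : [&& a' < b, b < a & interl (a' :: z) w] := H.
have /allP Hw := sorted_lt_head sw.
apply/allP => l; rewrite in_cons => /orP[/eqP -> //| lw].
exact: lt_trans (Hw l lw) h2.
Qed.

Lemma interl_lt_nth0 z w : interl z w -> all (fun l => l < z`_0) w.
Proof. by case: z => [|a z] //; exact: interl_lt_head. Qed.

Lemma count_gtc_all0 (c : R) s : all (fun l => l < c) s -> count (gtc c) s = 0%N.
Proof.
move=> /allP H; apply/eqP; rewrite -leqn0 leqNgt -has_count; apply/hasPn => l /H.
by rewrite /gtc -leNgt => /ltW.
Qed.

Lemma notin_all (c : R) s : all (fun l => l < c) s -> c \notin s.
Proof. by move=> /allP H; apply/negP => /H; rewrite ltxx. Qed.

Lemma deriv_struct u : (0 < size u)%N ->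
  exists D z w (g : R), [/\ perm_eq u (D ++ z), interl z w, 0 < g &
     (PP u)^`() = g *: (PP D * PP w)].
Proof.
move=> u0.
have [D [z0 [pu uz0 sD uz']]] := decomp u.
pose z := sort >=%R z0.
have pz : perm_eq z z0 by rewrite perm_sort.
have uz : uniq z by rewrite (perm_uniq pz).
have sz : sorted >%R z.
  by apply: sorted_ge_gt => //; apply: sort_sorted => a b; exact: le_total.
have memz : z =i z0 := perm_mem pz.
have sDz : {subset D <= z} by move=> t /sD; rewrite memz.
have puz : perm_eq u (D ++ z) by rewrite (perm_trans pu) // perm_cat2l perm_sym.
have a0 : u`_0 \in z by rewrite memz -uz' mem_nth.
have hz : (0 < size z)%N by move: a0; case: (z).
pose E := PP D; pose Z := PP z; pose T := \sum_(x <- D) PP (rem x z).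
pose G := T + Z^`().
have PPu : PP u = E * Z by rewrite /PP (perm_big _ puz) big_cat.
have dPPu : (PP u)^`() = E * G by rewrite PPu derivM deriv_PP_id // mulrDr.
have sgn : forall j, (j < size z)%N -> 0 < 1 * (-1) ^+ j * G.[z`_j].
  move=> j jz; pose x := z`_j; have xz : x \in z := mem_nth 0 jz.
  rewrite mul1r hornerD horner_T // horner_derivPP //.
  have xr : x \notin rem x z by rewrite mem_rem_uniqF.
  have hs := sign_PP xr.
  rewrite count_rem xz /gtc ltxx andbF subn0 count_sorted_nth // in hs.
  have hc : 0 <= (count_mem x D)%:R :> R := ler0n _ _.
  have -> : (-1) ^+ j * ((count_mem x D)%:R * (PP (rem x z)).[x] + (PP (rem x z)).[x])
     = ((count_mem x D)%:R + 1) * ((-1) ^+ j * (PP (rem x z)).[x]) by ring.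
  by apply: mulr_gt0 => //; lra.
have [w [izw rw]] := ivt_interl sz hz sgn.
have [_ sw] := interl_sorted izw; have uw := sorted_gt_uniq sw.
have G0 : G != 0.
  by apply: contraTneq (sgn 0%N hz) => ->; rewrite horner0 mulr0 ltxx.
have szw := interl_size izw.
have sG : size G = (size w).+1.
  apply/eqP; rewrite eqn_leq max_poly_roots // andbT.
  have h1 := lt_size_deriv (PP_neq0 u).
  rewrite dPPu size_mul ?PP_neq0 // size_PP (perm_size puz) size_cat size_PP in h1.
  rewrite addSn /= ltnS leq_add2l szw in h1; exact: h1.
have GE := poly_eq_PP sG uw rw.
pose g := lead_coef G.
have hw := interl_lt_nth0 izw.
have pw : 0 < (PP w).[z`_0].
  have := sign_PP (notin_all hw); rewrite count_gtc_all0 //.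
  by rewrite expr0 mul1r.
have g0 : 0 < g.
  have := sgn 0%N hz; rewrite GE hornerZ expr0 !mul1r.
  by rewrite pmulr_lgt0.
exists D, z, w, g; split => //.
by rewrite dPPu GE -scalerAr.
Qed.

Lemma interl_notin z w t : interl z w -> t \in w -> t \notin z.
Proof.
elim: w z => [|b w IH] [|a [|a' z]] // H.
have [sz sw] := interl_sorted H.
have /and3P[h1 h2 h3] : [&& a' < b, b < a & interl (a' :: z) w] := H.
have /allP Hz := sorted_lt_head (sz : sorted >%R (a :: a' :: z)).
have /allP Hw := sorted_lt_head (sw : sorted >%R (b :: w)).
have /allP Hz' := sorted_lt_head (path_sorted sz : sorted >%R (a' :: z)).
rewrite in_cons => /orP[/eqP ->|tw].
  rewrite !in_cons !negb_or (lt_eqF h2) (gt_eqF h1) /=.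
  by apply/negP => /Hz' bz; have := lt_trans bz h1; rewrite ltxx.
rewrite in_cons negb_or (IH _ h3 tw) andbT.
by rewrite lt_eqF // (lt_trans (Hw t tw) h2).
Qed.

Lemma interl_strip b b2 w y : interl (b :: w ++ [:: b2]) y -> interl y w.
Proof.
elim: w b y => [|c w IH] b [|y0 ys] //.
  by case: ys => [|? ?] //= /and3P[].
move=> H.
have /and3P[h1 h2 h3] : [&& c < y0, y0 < b & interl (c :: w ++ [:: b2]) ys] := H.
have i1 := IH c ys h3.
clear H; case: ys h3 i1 => [|y1 ys] h3 i1; first by move: h3; case: (w).
have -> : interl [:: y0, y1 & ys] (c :: w) = [&& y1 < c, c < y0 & interl (y1 :: ys) w] by [].
rewrite h1 i1 andbT /= andbT.
by move: h3; case: (w) => [|c' w'] /= /and3P[].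
Qed.

Lemma abs_le_sum t s : t \in s -> `|t| <= \sum_(l <- s) `|l|.
Proof.
move=> ts; rewrite (big_rem _ ts) /= lerDl.
by apply: sumr_ge0 => l _; exact: normr_ge0.
Qed.

Lemma sorted_rcons_gt s b : sorted >%R s -> all (fun l => b < l) s ->
  sorted >%R (rcons s b).
Proof.
elim: s => [|a s IH] //= ps /andP[ba bs].
rewrite rcons_path ps /=.
have /allP H : all (fun l => b < l) (a :: s) by rewrite /= ba bs.
exact: H _ (mem_last a s).
Qed.

Lemma core u (k a : R) : (0 < size u)%N -> 0 < k ->
  exists D y w (g d : R), [/\ 0 < g, 0 < d, interl y w,
    PP u + k *: (('X - a%:P) * (PP u)^`()) = d *: PP (D ++ y) &
    (PP u)^`() = g *: PP (D ++ w)] /\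
    size (D ++ y) = size u /\ size (D ++ w) = (size u).-1.
Proof.
move=> u0 k0.
have [D [z [w [g [puz izw g0 dPP]]]]] := deriv_struct u0.
pose F := PP z + (k * g) *: (('X - a%:P) * PP w).
have PPu : PP u = PP D * PP z by rewrite /PP (perm_big _ puz) big_cat.
have LHS : PP u + k *: (('X - a%:P) * (PP u)^`()) = PP D * F.
  by rewrite dPP PPu /F -!mul_polyC polyCM; ring.
pose B := 1 + `|a| + \sum_(l <- z ++ w) `|l|.
have Sge : 0 <= \sum_(l <- z ++ w) `|l| by apply: sumr_ge0 => l _.
have Bl : forall l, l \in z ++ w -> -B < l < B.
  move=> l lzw; have := abs_le_sum lzw; have := normr_ge0 a.
  have := ler_norm l; have := ler_norm (- l); rewrite normrN.
  rewrite /B; lra.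
have memz : forall l, l \in z -> l \in z ++ w by move=> l; rewrite mem_cat => ->.
have memw : forall l, l \in w -> l \in z ++ w by move=> l; rewrite mem_cat orbC => ->.
have Bz : all (fun l => l < B) z.
  by apply/allP => l lz; have /andP[] := Bl l (memz l lz).
have Bw : all (fun l => l < B) w.
  by apply/allP => l lw; have /andP[] := Bl l (memw l lw).
have Bz' : all (fun l => -B < l) z.
  by apply/allP => l lz; have /andP[] := Bl l (memz l lz).
have Bw' : all (fun l => -B < l) w.
  by apply/allP => l lw; have /andP[] := Bl l (memw l lw).
have Ba : a < B by have := ler_norm a; rewrite /B; lra.
have Ba' : -B < a by have := ler_norm (- a); rewrite normrN /B; lra.
have cntall : forall (c : R) s, all (fun l => c < l) s -> count (gtc c) s = size s.
  by move=> c s Hs; apply/eqP; rewrite -all_count.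
have notin' : forall (c : R) s, all (fun l => c < l) s -> c \notin s.
  by move=> c s /allP H; apply/negP => /H; rewrite ltxx.
pose xs := B :: w ++ [:: -B].
have [_ sw] := interl_sorted izw.
have sxs : sorted >%R xs.
  rewrite /xs /= (path_sortedE gt_trans) cats1; apply/andP; split.
    rewrite all_rcons; apply/andP; split; last exact: Bw.
    by have := normr_ge0 a; rewrite /B /=; lra.
  by apply: sorted_rcons_gt.
have WB : 0 < (PP w).[B] by have := sign_PP (notin_all Bw); rewrite count_gtc_all0 // mul1r.
have ZB : 0 < (PP z).[B] by have := sign_PP (notin_all Bz); rewrite count_gtc_all0 // mul1r.
have FB : 0 < F.[B].
  rewrite /F hornerD hornerZ hornerM !hornerE.
  have : 0 <= k * g * (B - a) * (PP w).[B].
    by apply: mulr_ge0; [apply: mulr_ge0; [apply: ltW; exact: mulr_gt0 | lra] | exact: ltW].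
  by move=> h; apply: (lt_le_trans ZB); rewrite lerDl.
have szw := interl_size izw.
have sgn : forall j, (j < size xs)%N -> 0 < 1 * (-1) ^+ j * F.[xs`_j].
  move=> [|j] jx; first by rewrite expr0 !mul1r.
  rewrite mul1r /xs /= nth_cat.
  case: (ltnP j (size w)) => jw.
    have wj : w`_j \in w := mem_nth 0 jw.
    have := sign_PP (interl_notin izw wj); rewrite (interl_count_nth izw jw).
    rewrite /F hornerD hornerZ hornerM.
    have -> : (PP w).[w`_j] = 0 by apply/rootP; rewrite root_prod_XsubC.
    by rewrite !mulr0 addr0.
  have -> : j = size w by move: jx; rewrite /= size_cat /= addn1 ltnS => jx; apply/eqP; rewrite eqn_leq jw andbT.
  rewrite subnn /=.
  have hZ := sign_PP (notin' _ _ Bz'); rewrite cntall // szw in hZ.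
  have hW := sign_PP (notin' _ _ Bw'); rewrite cntall // in hW.
  rewrite /F hornerD hornerZ hornerM !hornerE mulrDr.
  apply: addr_gt0 => //.
  have -> : (-1) ^+ (size w).+1 * (k * g * (- B - a) * (PP w).[- B]) =
     (k * g) * (B + a) * ((-1) ^+ (size w) * (PP w).[- B]) by rewrite exprS; ring.
  by apply: mulr_gt0 => //; apply: mulr_gt0; [exact: mulr_gt0 | lra].
have [y [ixy ry]] := ivt_interl sxs isT sgn.
have F0 : F != 0 by apply: contraTneq FB => ->; rewrite horner0 ltxx.
have [sxy sy] := interl_sorted ixy; have uy := sorted_gt_uniq sy.
have sxs' := interl_size ixy.
have e1 : size y = (size w).+1 by move: sxs'; rewrite /xs /= size_cat /= addn1 => -[].
have sF : size F = (size y).+1.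
  apply/eqP; rewrite eqn_leq max_poly_roots // andbT.
  rewrite e1 /F; apply: (leq_trans (size_polyD _ _)); rewrite geq_max size_PP szw leqnn /=.
  have h := size_scale_leq (k * g) (('X - a%:P) * PP w).
  apply: (leq_trans h).
  rewrite size_mul ?PP_neq0 ?polyXsubC_eq0 // size_XsubC size_PP //.
have FE := poly_eq_PP sF uy ry.
have yB : all (fun l => l < B) y := interl_lt_head ixy.
have YB : 0 < (PP y).[B] by have := sign_PP (notin_all yB); rewrite count_gtc_all0 // mul1r.
have d0 : 0 < lead_coef F.
  by move: FB; rewrite {1}FE hornerZ (pmulr_lgt0 _ YB).
exists D, y, w, g, (lead_coef F); split; last first.
  by rewrite (perm_size puz) !size_cat e1 szw addnS.
split => //.
- exact: interl_strip ixy.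
- by rewrite LHS {1}FE -scalerAr PP_cat.
- by rewrite dPP PP_cat.
Qed.

Lemma sorted_ge_head a s : sorted >=%R (a :: s) -> all (fun l => l <= a) s.
Proof. by move=> h; apply: (order_path_min _ h) => y x' z h1 h2; exact: le_trans h2 h1. Qed.

Lemma count_lt_sorted s j (c : R) : sorted >=%R s -> (j < size s)%N -> c < s`_j ->
  (j < count (gtc c) s)%N.
Proof.
elim: s j => [|a s IH] [|j] //=.
  by move=> _ _ h; rewrite /gtc h.
move=> ss js cs.
have /allP H := sorted_ge_head ss.
have := IH j (path_sorted ss) js cs.
have -> : gtc c a by rewrite /gtc (lt_le_trans cs) // H // mem_nth.
by rewrite add1n.
Qed.

Lemma count_le_sorted s j (c : R) : sorted >=%R s -> (j < size s)%N -> s`_j <= c ->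
  (count (gtc c) s <= j)%N.
Proof.
elim: s j => [|a s IH] [|j] //=.
  move=> ss _ ac; have /allP H := sorted_ge_head ss.
  rewrite /gtc ltNge ac /= add0n leqn0; apply/eqP.
  apply/eqP; rewrite -leqn0 leqNgt -has_count; apply/hasPn => l ls.
  by rewrite /gtc ltNge (le_trans (H l ls) ac).
move=> ss js cs.
have := IH j (path_sorted ss) js cs.
by case: (gtc c a) => /=; rewrite ?add1n ?add0n // => h; apply: leqW.
Qed.

Lemma interlace_idx u v k : size u = k -> size v = k.-1 ->
  sorted >=%R u -> sorted >=%R v ->
  (forall c, count (gtc c) v <= count (gtc c) u <= (count (gtc c) v).+1)%N ->
  forall j, (j < k.-1)%N -> u`_j.+1 <= v`_j /\ v`_j <= u`_j.
Proof.
move=> su sv ou ov H j jk.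
have jv : (j < size v)%N by rewrite sv.
have ju : (j.+1 < size u)%N by rewrite su; move: jk; case: (k) => //.
have ju' : (j < size u)%N by apply: ltnW.
split; rewrite leNgt; apply/negP => h.
  have h1 := count_le_sorted ov jv (lexx (v`_j)).
  have h2 := count_lt_sorted ou ju h.
  have /andP[_ h3] := H (v`_j).
  have := leq_trans h2 h3; rewrite ltnS => h4.
  by have := leq_trans h4 h1; rewrite ltnn.
have h1 := count_le_sorted ou ju' (lexx (u`_j)).
have h2 := count_lt_sorted ov jv h.
have /andP[h3 _] := H (u`_j).
by have := leq_trans (leq_trans h2 h3) h1; rewrite ltnn.
Qed.

End Lists.

Section Sig.
Variables (R : rcfType) (n : nat) (r : 'I_n -> R).

Definition sig (A : {set 'I_n}) (m : nat) : {poly R} :=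
  \sum_(S : {set 'I_n} | (S \subset A) && (#|S| == m)) \prod_(j in S) ('X + (r j)%:P).

Lemma sigma_sig m : sigma_poly r m = sig setT m.
Proof. by apply: eq_bigl => S; rewrite subsetT. Qed.

Lemma sig0 (A : {set 'I_n}) : sig A 0 = 1.
Proof.
rewrite /sig (big_pred1 set0) ?big_set0 // => S /=.
by rewrite cards_eq0; case: eqP => [->|_]; rewrite ?sub0set ?andbF.
Qed.

Lemma sig_big (A : {set 'I_n}) m : (#|A| < m)%N -> sig A m = 0.
Proof.
move=> Am; rewrite /sig big_pred0 // => S /=.
apply/negP => /andP[SA /eqP Sm].
by have := subset_leq_card SA; rewrite Sm leqNgt Am.
Qed.

Lemma sig_rec (A : {set 'I_n}) i m : i \in A ->
  sig A m.+1 = sig (A :\ i) m.+1 + ('X + (r i)%:P) * sig (A :\ i) m.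
Proof.
move=> iA; rewrite /sig [LHS](bigID (fun S : {set 'I_n} => i \in S)) [LHS]addrC; congr (_ + _).
  by apply: eq_bigl => S; rewrite subsetD1 andbAC.
rewrite mulr_sumr.
rewrite (reindex_onto (fun T => i |: T) (fun S => S :\ i)); last first.
  by move=> S /andP[_ iS]; rewrite setD1K.
apply: (@eq_trans _ _ (\sum_(T : {set 'I_n} | (T \subset A :\ i) && (#|T| == m))
   \prod_(j in i |: T) ('X + (r j)%:P))); last first.
  by apply: eq_bigr => T /andP[iT _]; rewrite big_setU1 //; move: iT; rewrite subsetD1 => /andP[].
apply: eq_bigl => T.
  case: (boolP (i \in T)) => iT.
    have eT : i |: T = T by apply/setUidPr; rewrite sub1set.
    rewrite eT.
    have -> : (T :\ i == T) = false.
      by apply/negbTE; apply/eqP => eT'; move: iT; rewrite -eT' setD11.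
    by rewrite andbF subsetD1 iT andbF.
  rewrite setU1K // eqxx setU11 !andbT cardsU1 iT add1n eqSS.
  by rewrite subUset sub1set iA subsetD1 iT andbT.
Qed.
Lemma derivXaddC (c : R) : ('X + c%:P)^`() = 1.
Proof. by rewrite derivD derivX derivC addr0. Qed.

Lemma sig_deriv (A : {set 'I_n}) m : (sig A m.+1)^`() = (#|A| - m)%:R *: sig A m.
Proof.
move: {2}#|A| (erefl #|A|) => N; elim: N A m => [|N IH] A m hA.
  by rewrite sig_big ?hA // deriv0 sub0n scale0r.
have : A != set0 by rewrite -cards_eq0 hA.
case/set0Pn => i iA.
have hA' : #|A :\ i| = N by move: hA; rewrite (cardsD1 i A) iA add1n => -[].
rewrite (sig_rec m iA) derivD derivM derivXaddC IH // mul1r hA.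
case: m => [|m].
  rewrite !sig0 subn0 hA' subn0 derivC mulr0 addr0.
  by rewrite -!mul_polyC !mulr1 -natr1 rmorphD rmorph1.
rewrite IH // hA' subSS (sig_rec m iA).
case: (leqP m.+1 N) => hm.
  have e : (N - m.+1)%:R + 1 = (N - m)%:R :> R by rewrite natr1 subnSK.
  rewrite -!mul_polyC -e rmorphD rmorph1; ring.
rewrite (sig_big (A := A :\ i) (m := m.+1)) ?hA' //.
rewrite -!mul_polyC; ring.
Qed.
Lemma sig_top (A : {set 'I_n}) :
  sig A #|A| = PP [seq - r j | j <- enum A].
Proof.
rewrite /sig (big_pred1 A) => [|S /=].
  by rewrite /PP big_map big_enum; apply: eq_bigr => j _; rewrite polyCN opprK.
rewrite eqEcard; case: (boolP (S \subset A)) => //= SA.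
by rewrite eqn_leq subset_leq_card.
Qed.

Lemma deriv_PP_struct s : (0 < size s)%N -> exists (g : R) t,
  [/\ 0 < g, size t = (size s).-1 & (PP s)^`() = g *: PP t].
Proof.
move=> s0; have [D [z [w [g [psz izw g0 dP]]]]] := deriv_struct s0.
exists g, (D ++ w); split => //; last by rewrite dP PP_cat.
by rewrite (perm_size psz) !size_cat (interl_size izw) addnS.
Qed.

Lemma sig_RR (A : {set 'I_n}) m : (m <= #|A|)%N ->
  exists (c : R) s, [/\ 0 < c, size s = m & sig A m = c *: PP s].
Proof.
move=> hm; have [d hd] : exists d, (m + d = #|A|)%N by exists (#|A| - m)%N; rewrite subnKC.
elim: d m hd {hm} => [|d IH] m hd.
  rewrite addn0 in hd; rewrite hd sig_top.
  by exists 1, [seq - r j | j <- enum A]; rewrite scale1r size_map -cardE ltr01.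
have hd1 : (m.+1 + d)%N = #|A| by rewrite addSnnS.
have [c [s [c0 ss e]]] := IH m.+1 hd1.
have s0 : (0 < size s)%N by rewrite ss.
have [g [t [g0 st e']]] := deriv_PP_struct s0.
have hd' : (#|A| - m)%N = d.+1 by rewrite -hd addKn.
have := sig_deriv A m; rewrite e derivZ e' hd' => E.
have d0 : (d.+1%:R : R) != 0 by rewrite pnatr_eq0.
exists ((d.+1%:R)^-1 * (c * g)), t; split.
- by rewrite mulr_gt0 ?invr_gt0 ?ltr0n // mulr_gt0.
- by rewrite st ss.
- by apply: (scalerI d0); rewrite -E scalerA scalerA mulrA divff // mul1r.
Qed.
Lemma q_sig i k : q_poly r i k.+1 = sig (setT :\ i) k.
Proof.
elim: k => [|k IH].
  by rewrite /q_poly big_ord1 /= expr0 scale1r mulr1 sigma_sig !sig0.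
rewrite /q_poly big_ord_recl /= subn0 expr0 scale1r mulr1.
set x := 'X + (r i)%:P.
have -> : \sum_(j < k.+1) ((-1) ^+ (lift ord0 j) *: sigma_poly r (k.+1 - lift ord0 j)
     * x ^+ lift ord0 j) = - (x * q_poly r i k.+1).
  rewrite /q_poly mulr_sumr -sumrN; apply: eq_bigr => j _.
  rewrite lift0 subSS /= !exprS mulN1r scaleNr -!mul_polyC; ring.
rewrite IH sigma_sig (sig_rec k (in_setT i)) /x; ring.
Qed.
End Sig.

Lemma final_step (R : rcfType) (f g : {poly R}) (cf cg : R) U V k :
  cf != 0 -> cg != 0 -> f = cf *: PP U -> g = cg *: PP V ->
  size U = k -> size V = k.-1 ->
  (forall c, count (gtc c) V <= count (gtc c) U <= (count (gtc c) V).+1)%N ->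
  (exists (u v : seq R),
      [/\ size u = k, size v = k.-1, is_root_list f u & is_root_list g v]) /\
  (forall (u v : seq R),
      size u = k -> size v = k.-1 -> nonincr u -> nonincr v ->
      is_root_list f u -> is_root_list g v ->
      forall j : nat, (j < k.-1)%N ->
        u`_j.+1 <= v`_j /\ v`_j <= u`_j).
Proof.
move=> cf0 cg0 ef eg sU sV Hc.
have lf : lead_coef f = cf by rewrite ef lead_coefZ lc_PP mulr1.
have lg : lead_coef g = cg by rewrite eg lead_coefZ lc_PP mulr1.
split.
  by exists U, V; split => //; rewrite /is_root_list ?lf ?lg.
move=> u v su sv ou ov ru rv.
have pu : perm_eq U u.
  apply: prod_XsubC_eq; apply: (scalerI cf0).
  by rewrite -ef -lf -ru.
have pv : perm_eq V v.
  apply: prod_XsubC_eq; apply: (scalerI cg0).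
  by rewrite -eg -lg -rv.
apply: (interlace_idx su sv ou ov) => c.
by have := Hc c; rewrite (permP pu) (permP pv).
Qed.

Unset Implicit Arguments.

Theorem lemma2p8 (R : rcfType) (n : nat) (r : 'I_n -> R) (i : 'I_n) (k : nat)
    (hk1 : (1 <= k)%N) (hkn : (k <= n)%N) :
  (exists (u v : seq R),
      [/\ size u = k, size v = k.-1,
          is_root_list (sigma_poly r k) u & is_root_list (q_poly r i k) v]) /\
  (forall (u v : seq R),
      size u = k -> size v = k.-1 -> nonincr u -> nonincr v ->
      is_root_list (sigma_poly r k) u -> is_root_list (q_poly r i k) v ->
      forall j : nat, (j < k.-1)%N ->
        u`_j.+1 <= v`_j /\ v`_j <= u`_j).
Proof.
case: k hk1 hkn => // k _ hkn.
pose A' := [set: 'I_n] :\ i.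
have cA' : #|A'| = n.-1.
  have h := cardsD1 i [set: 'I_n]; rewrite cardsT card_ord in_setT add1n in h.
  by rewrite [in RHS]h.
have q_eq : q_poly r i k.+1 = sig r A' k by rewrite q_sig.
have f_eq : sigma_poly r k.+1 = sig r A' k.+1 + ('X + (r i)%:P) * sig r A' k.
  by rewrite sigma_sig (sig_rec _ k (in_setT i)).
rewrite q_eq f_eq.
have hk : (k <= #|A'|)%N by rewrite cA'; move: hkn; case: (n).
have [c [s [c0 ss es]]] := sig_RR r hk.
case: (ltnP k.+1 n) => hkn'.
  have hk1 : (k.+1 <= #|A'|)%N by rewrite cA'; move: hkn'; case: (n).
  have [c1 [s1 [c10 ss1 es1]]] := sig_RR r hk1.
  have s10 : (0 < size s1)%N by rewrite ss1.
  have nk0 : ((n - k.+1)%N%:R : R) != 0 by rewrite pnatr_eq0 -lt0n subn_gt0.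
  have nk0' : 0 < ((n - k.+1)%N%:R : R)^-1 by rewrite invr_gt0 ltr0n subn_gt0.
  have [D [y [w [g [d [[g0 d0 iyw E1 E2] [sy sw]]]]]]] := core (- r i) s10 nk0'.
  have dsig := sig_deriv r A' k.
  rewrite es1 derivZ E2 cA' in dsig.
  have ek : (n.-1 - k)%N = (n - k.+1)%N by rewrite -subn1 -subnDA add1n.
  rewrite ek in dsig.
  have esk : sig r A' k = (((n - k.+1)%N%:R)^-1 * (c1 * g)) *: PP (D ++ w).
    by apply: (scalerI nk0); rewrite -dsig scalerA scalerA mulrA divff // mul1r.
  have ef : sig r A' k.+1 + ('X + (r i)%:P) * sig r A' k = (c1 * d) *: PP (D ++ y).
    rewrite -scalerA -E1 es1 esk E2 polyCN opprK.
    by rewrite -!mul_polyC !polyCM; ring.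
  apply: (final_step _ _ ef esk).
  - by rewrite mulf_neq0 // gt_eqF.
  - by rewrite !mulf_neq0 // ?invr_eq0 // gt_eqF.
  - by rewrite sy ss1.
  - by rewrite sw ss1.
  - move=> x; rewrite !count_cat.
    have /andP[h1 h2] := interl_count x iyw.
    by rewrite leq_add2l h1 /= -addnS leq_add2l h2.
have en : n = k.+1 by apply/eqP; rewrite eqn_leq hkn' hkn.
have z0 : sig r A' k.+1 = 0 by rewrite sig_big // cA' en.
rewrite z0 add0r es.
have ef : ('X + (r i)%:P) * (c *: PP s) = c *: PP ((- r i) :: s).
  by rewrite PP_cons polyCN opprK scalerAr.
apply: (final_step _ _ ef (erefl _)).
- by rewrite gt_eqF.
- by rewrite gt_eqF.
- by rewrite /= ss.
- by rewrite ss.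
- move=> x /=; case: (gtc x (- r i)) => /=.
    by rewrite add1n leqnSn leqnn.
  by rewrite add0n leqnn leqnSn.
Qed.
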